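(* Let $M'=\langle A,\Sigma\rangle$ be a countable structure and let $\mathcal{F}$ be the set of all (everywhere defined) functions $f\colon\mathbb{N}\to A$. Let $\varphi\colon\mathcal{F}\to\mathcal{F}$ be a partial mapping with countable domain which almost preserves every relation definable in $\langle A,\Sigma\rangle$. Then for every $a\in\mathcal{F}$ with $a\notin \mathrm{Dom}(\varphi)$ there exists $b\in\mathcal{F}$ such that the mapping $\varphi\cup\{\langle a,b\rangle\}$ (extending $\varphi$ by $a\mapsto b$) almost preserves every relation definable in $\langle A,\Sigma\rangle$.
   Context: The signature $\Sigma$ contains the equality symbol $=$. A relation on $A$ is definable in $\langle A,\Sigma\rangle$ if it is defined in $M'$ by a first-order formula in the signature $\Sigma$ (without parameters). For an $n$-ary relation $P$ on $A$ and a partial mapping $\psi\colon\mathcal{F}\to\mathcal{F}$, we say $\psi$ almost preserves $P$ if for all $f_1,\dots,f_n\in\mathrm{Dom}(\psi)$ the set $\{i\in\mathbb{N} : P(f_1(i),\dots,f_n(i))\not\leftrightarrow P(\psi(f_1)(i),\dots,\psi(f_n)(i))\}$ is finite. *)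

(* Defs.v *)
From Stdlib Require Import ClassicalEpsilon.
From mathcomp Require Import all_boot.

Set Implicit Arguments.
Unset Strict Implicit.
Unset Printing Implicit Defensive.

Record signature := Signature {
  fsym : Type;                 (* function symbols (constants = arity 0) *)
  rsym : Type;
  farity : fsym -> nat;
  rarity : rsym -> nat }.

Record structure (S : signature) := Structure {
  carrier :> Type;
  fun_interp : forall f : fsym S, ('I_(farity f) -> carrier) -> carrier;
  rel_interp : forall r : rsym S, ('I_(rarity r) -> carrier) -> Prop }.

Definition countable_type (T : Type) : Prop :=
  exists g : T -> nat, forall x y, g x = g y -> x = y.

Definition countable_structure (S : signature) (M : structure S) : Prop :=
  countable_type (fsym S) /\ countable_type (rsym S) /\ countable_type M.

Inductive term (S : signature) : Type :=
  | Var : nat -> term S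
  | App : forall f : fsym S, ('I_(farity f) -> term S) -> term S.

Inductive formula (S : signature) : Type :=
  | FEq : term S -> term S -> formula S
  | FRel : forall r : rsym S, ('I_(rarity r) -> term S) -> formula S
  | FNeg : formula S -> formula S
  | FAnd : formula S -> formula S -> formula S
  | FExists : nat -> formula S -> formula S.

Fixpoint eval_term (S : signature) (M : structure S) (v : nat -> M) (t : term S)
  : M :=
  match t with
  | Var n => v n
  | App f ts => @fun_interp S M f (fun i => eval_term v (ts i))
  end.

Definition update (T : Type) (v : nat -> T) (n : nat) (x : T) : nat -> T :=
  fun k => if k == n then x else v k.

Fixpoint sat (S : signature) (M : structure S) (v : nat -> M) (phi : formula S)
  : Prop :=
  match phi with
  | FEq t1 t2 => eval_term v t1 = eval_term v t2
  | FRel r ts => @rel_interp S M r (fun i => eval_term v (ts i))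
  | FNeg p => ~ sat v p
  | FAnd p q => sat v p /\ sat v q
  | FExists n p => exists x : M, sat (update v n x) p
  end.

(** An n-ary relation P on M is definable (without parameters) if some formula
    whose truth depends only on variables x_0,...,x_(n-1) defines it. *)
Definition definable (S : signature) (M : structure S) (n : nat)
  (P : ('I_n -> M) -> Prop) : Prop :=
  exists phi : formula S, forall (a : 'I_n -> M) (v : nat -> M),
    (forall i : 'I_n, v i = a i) -> (P a <-> sat v phi).

(** A partial map on F = (nat -> A), given by a domain and a total function
    whose values outside the domain are irrelevant. *)
Definition almost_preserves (A : Type) (Dom : (nat -> A) -> Prop)
  (psi : (nat -> A) -> (nat -> A)) (n : nat) (P : ('I_n -> A) -> Prop) : Prop :=
  forall fs : 'I_n -> (nat -> A), (forall j, Dom (fs j)) ->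
    exists N : nat, forall i : nat, N <= i ->
      (P (fun j => fs j i) <-> P (fun j => psi (fs j) i)).

Definition almost_preserves_definable (S : signature) (M : structure S)
  (Dom : (nat -> M) -> Prop) (psi : (nat -> M) -> (nat -> M)) : Prop :=
  forall (n : nat) (P : ('I_n -> M) -> Prop),
    definable P -> almost_preserves Dom psi P.

Definition ext_dom (A : Type) (Dom : (nat -> A) -> Prop) (a : nat -> A)
  : (nat -> A) -> Prop := fun f => Dom f \/ f = a.

Definition ext_map (A : Type) (psi : (nat -> A) -> (nat -> A)) (a b : nat -> A)
  : (nat -> A) -> (nat -> A) :=
  fun f => if excluded_middle_informative (f = a) then b else psi f.

(* Main.v *)
Require Import Defs.
From Stdlib Require Import ClassicalEpsilon FunctionalExtensionality.
From mathcomp Require Import all_boot.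

Set Implicit Arguments.
Unset Strict Implicit.
Unset Printing Implicit Defensive.

Section Syntax.
Variable S : signature.

Fixpoint tb (t : term S) : nat :=
  match t with Var n => n.+1 | App f ts => \max_(i < farity f) tb (ts i) end.

Fixpoint fb (p : formula S) : nat :=
  match p with
  | FEq t1 t2 => maxn (tb t1) (tb t2)
  | FRel r ts => \max_(i < rarity r) tb (ts i)
  | FNeg q => fb q
  | FAnd q1 q2 => maxn (fb q1) (fb q2)
  | FExists _ q => fb q
  end.

Fixpoint subt (s : nat -> nat) (t : term S) : term S :=
  match t with Var n => Var S (s n) | App f ts => App (fun i => subt s (ts i)) end.

Fixpoint substf (s : nat -> nat) (p : formula S) : formula S :=
  match p with
  | FEq t1 t2 => FEq (subt s t1) (subt s t2)
  | FRel r ts => FRel (fun i => subt s (ts i))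
  | FNeg q => FNeg (substf s q)
  | FAnd q1 q2 => FAnd (substf s q1) (substf s q2)
  | FExists n q => let z := (\max_(m < fb q) s m).+1 in
      FExists z (substf (fun k => if k == n then z else s k) q)
  end.

Lemma agree_t (M : structure S) (v w : nat -> M) t :
  (forall m, m < tb t -> v m = w m) -> eval_term v t = eval_term w t.
Proof.
elim: t => [n|f ts IH] /= H; first by apply: H.
congr fun_interp; apply: functional_extensionality => i; apply: IH => m Hm.
apply: H; apply: leq_trans Hm _; by rewrite (bigD1 i) //= leq_maxl.
Qed.

Lemma agree_f (M : structure S) p : forall (v w : nat -> M),
  (forall m, m < fb p -> v m = w m) -> (sat v p <-> sat w p).
Proof.
elim: p => [t1 t2|r ts|q IH|q1 IH1 q2 IH2|n q IH] v w H /=.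
- rewrite (agree_t (v:=v) (w:=w)) ?(agree_t (v:=v) (w:=w) (t:=t2)) //.
  + by move=> m Hm; apply: H; rewrite leq_max Hm orbT.
  + by move=> m Hm; apply: H; rewrite leq_max Hm.
- have -> : (fun i => eval_term v (ts i)) = (fun i => eval_term w (ts i)) => //.
  apply: functional_extensionality => i; apply: agree_t => m Hm.
  apply: H; apply: leq_trans Hm _; by rewrite /= (bigD1 i) //= leq_maxl.
- by rewrite (IH v w H).
- rewrite (IH1 v w) ?(IH2 v w) //.
  + by move=> m Hm; apply: H; rewrite leq_max Hm orbT.
  + by move=> m Hm; apply: H; rewrite leq_max Hm.
- split=> [[x Hx]|[x Hx]]; exists x.
  + apply/(IH (update v n x)) => // m Hm; rewrite /update; case: eqP => //.
    by move=> _; apply: H.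
  + apply/(IH _ (update w n x)) => // m Hm; rewrite /update; case: eqP => //.
    by move=> _; apply: H.
Qed.

Lemma subt_ok (M : structure S) (v : nat -> M) s t :
  eval_term v (subt s t) = eval_term (fun k => v (s k)) t.
Proof.
elim: t => [n|f ts IH] //=.
by congr fun_interp; apply: functional_extensionality => i; apply: IH.
Qed.

Lemma substf_ok (M : structure S) p : forall s (v : nat -> M),
  sat v (substf s p) <-> sat (fun k => v (s k)) p.
Proof.
elim: p => [t1 t2|r ts|q IH|q1 IH1 q2 IH2|n q IH] s v /=.
- by rewrite !subt_ok.
- have -> : (fun i => eval_term v (subt s (ts i))) =
            (fun i => eval_term (fun k => v (s k)) (ts i)) => //.
  by apply: functional_extensionality => i; rewrite subt_ok.
- by rewrite IH.
- by rewrite IH1 IH2.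
- set z := (\max_(m < fb q) s m).+1.
  split=> [[x Hx]|[x Hx]]; exists x.
  + move/IH: Hx; apply: (fun H => proj1 (agree_f H)) => m Hm; rewrite /update.
    case: (m =P n) => [_|_]; first by rewrite eqxx.
    case: eqP => // E; exfalso.
    have : s m < z by rewrite ltnS (bigD1 (Ordinal Hm)) //= leq_maxl.
    by rewrite E ltnn.
  + apply/IH; move: Hx; apply: (fun H => proj1 (agree_f H)) => m Hm; rewrite /update.
    case: (m =P n) => [_|_]; first by rewrite eqxx.
    case: eqP => // E; exfalso.
    have : s m < z by rewrite ltnS (bigD1 (Ordinal Hm)) //= leq_maxl.
    by rewrite E ltnn.
Qed.

End Syntax.

Definition bsat S (M : structure S) (v : nat -> M) p : bool :=
  if excluded_middle_informative (sat v p) then true else false.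

Lemma bsatP S (M : structure S) (v : nat -> M) p : bsat v p = true <-> sat v p.
Proof. by rewrite /bsat; case: excluded_middle_informative. Qed.

Lemma max_exists (I : finType) (Q : I -> nat -> Prop) :
  (forall p, exists N, forall i, N <= i -> Q p i) ->
  exists N, forall p i, N <= i -> Q p i.
Proof.
move=> H.
pose Nf p := proj1_sig (constructive_indefinite_description _ (H p)).
exists (\max_p Nf p) => p i Hi.
apply: (proj2_sig (constructive_indefinite_description _ (H p))).
apply: leq_trans Hi; by rewrite (bigD1 p) //= leq_maxl.
Qed.

Section Main.
Variables (S : signature) (M : structure S) (Dom : (nat -> M) -> Prop)
  (phi : (nat -> M) -> (nat -> M)).
Hypothesis Hpres : almost_preserves_definable Dom phi.

Lemma transfer (t : nat -> nat -> M) : (forall m, Dom (t m)) -> forall chi,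
  exists N, forall i, N <= i ->
    (sat (fun m => t m i) chi <-> sat (fun m => phi (t m) i) chi).
Proof.
move=> Ht chi.
pose n := fb chi.
pose c0 := t 0 0.
pose ext (g : 'I_n -> M) (m : nat) : M := odflt c0 (omap g (insub m)).
have extE : forall g m (Hm : m < n), ext g m = g (Ordinal Hm).
  by move=> g m Hm; rewrite /ext insubT.
pose P (g : 'I_n -> M) := sat (ext g) chi.
have defP : definable P.
  rewrite /definable; exists chi => g v Hv; apply: agree_f => m Hm.
  by rewrite (extE _ _ Hm) -(Hv (Ordinal Hm)).
have [N HN] := Hpres defP (fun j : 'I_n => Ht j).
exists N => i Hi; have := HN i Hi; rewrite /P => HP.
have E1 : sat (fun m => t m i) chi <-> sat (ext (fun j : 'I_n => t j i)) chi.
  by apply: agree_f => m Hm; rewrite (extE _ _ Hm).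
have E2 : sat (fun m => phi (t m) i) chi <-> sat (ext (fun j : 'I_n => phi (t j) i)) chi.
  by apply: agree_f => m Hm; rewrite (extE _ _ Hm).
rewrite E1 E2; exact: HP.
Qed.

Variables (e : nat -> formula S) (d : nat -> nat -> M) (a : nat -> M).
Hypothesis Hd : forall m, Dom (d m).

Definition envA i m : M := if m is m'.+1 then d m' i else a i.
Definition envB (x : M) i m : M := if m is m'.+1 then phi (d m') i else x.

Definition good i k := exists x : M, forall m, m <= k ->
  (sat (envB x i) (e m) <-> sat (envA i) (e m)).

Definition lit (p : nat -> bool) m := if p m then e m else FNeg (e m).
Fixpoint conjf (p : nat -> bool) k :=
  match k with 0 => lit p 0 | k'.+1 => FAnd (conjf p k') (lit p k'.+1) end.

Lemma litP (v : nat -> M) p m : sat v (lit p m) <-> (sat v (e m) <-> p m).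
Proof.
rewrite /lit; case: (p m) => /=.
- split=> [H|[_ H]]; [by split | exact: H].
- split=> [H|[H _] Hs]; first by split=> // /H.
  by have := H Hs.
Qed.

Lemma conjfP (v : nat -> M) p k : sat v (conjf p k) <-> forall m, m <= k -> (sat v (e m) <-> p m).
Proof.
elim: k => [|k IH] /=.
  rewrite litP; split=> [H m|H]; last exact: H.
  by rewrite leqn0 => /eqP ->.
rewrite IH litP; split=> [[H1 H2] m|H].
  by rewrite leq_eqVlt ltnS => /orP [/eqP ->|]; [exact: H2 | exact: H1].
by split=> [m Hm|]; apply: H => //; apply: leqW.
Qed.

Lemma Nk k : exists N, forall i, N <= i -> good i k.
Proof.
have H : forall p : {ffun 'I_k.+1 -> bool}, exists N, forall i, N <= i ->
   (sat (fun m => d m.-1 i) (FExists 0 (conjf (fun m => p (inord m)) k)) <->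
    sat (fun m => phi (d m.-1) i) (FExists 0 (conjf (fun m => p (inord m)) k))).
  by move=> p; apply: (transfer (t := fun m => d m.-1)).
have [N HN] := max_exists H.
exists N => i Hi.
pose p := [ffun j : 'I_k.+1 => bsat (envA i) (e j)].
have := HN p i Hi => /= [[HA _]].
have updA : forall x, update (fun m => d m.-1 i) 0 x = update (envA i) 0 x.
  by move=> x; apply: functional_extensionality => -[|m].
have updB : forall x, update (fun m => phi (d m.-1) i) 0 x = envB x i.
  by move=> x; apply: functional_extensionality => -[|m].
have [|x Hx] := HA.
  exists (a i); rewrite updA.
  have -> : update (envA i) 0 (a i) = envA i.
    by apply: functional_extensionality => -[|m].
  apply/conjfP => m Hm; rewrite ffunE inordK //; symmetry; exact: bsatP.
exists x => m Hm; rewrite updB in Hx.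
move/conjfP: Hx => /(_ m Hm) ->; rewrite ffunE inordK //; exact: bsatP.
Qed.

Lemma bex i : exists x : M, forall k, k <= i -> good i k ->
  forall m, m <= k -> (sat (envB x i) (e m) <-> sat (envA i) (e m)).
Proof.
suff : forall j, exists x : M, forall k, k <= j -> good i k ->
  forall m, m <= k -> (sat (envB x i) (e m) <-> sat (envA i) (e m)) by [].
elim=> [|j [y Hy]].
  case: (classic (good i 0)) => [[x Hx]|Hn].
    by exists x => k; rewrite leqn0 => /eqP -> _.
  by exists (a i) => k; rewrite leqn0 => /eqP -> /Hn.
case: (classic (good i j.+1)) => [[x Hx]|Hn].
  exists x => k Hk _ m Hm; apply: Hx; exact: leq_trans Hm Hk.
exists y => k; rewrite leq_eqVlt ltnS => /orP [/eqP ->|Hk]; first by move/Hn.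
exact: Hy.
Qed.

Definition bb i := proj1_sig (constructive_indefinite_description _ (bex i)).

Lemma key (He : forall p, exists k, e k = p) th :
  exists N, forall i, N <= i -> (sat (envA i) th <-> sat (envB (bb i) i) th).
Proof.
have [k0 <-] := He th.
have [N HN] := Nk k0.
exists (maxn N k0) => i; rewrite geq_max => /andP [H1 H2].
have := proj2_sig (constructive_indefinite_description _ (bex i)) k0 H2 (HN i H1) k0 (leqnn _).
rewrite /bb => H; split=> ?; by apply/H.
Qed.

End Main.

Section Enc.
Variables (S : signature) (gf : Defs.fsym S -> nat) (gr : rsym S -> nat).
Hypotheses (Hgf : forall x y, gf x = gf y -> x = y) (Hgr : forall x y, gr x = gr y -> x = y).

Fixpoint enct (t : term S) : GenTree.tree nat :=
  match t with
  | Var n => GenTree.Node 0 [:: GenTree.Leaf n]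
  | App f ts => GenTree.Node 1 (GenTree.Leaf (gf f) :: [seq enct (ts i) | i <- enum 'I_(farity f)])
  end.

Lemma enct_inj : injective enct.
Proof.
elim=> [n|f ts IH] [m|f' ts'] //=; first by case=> ->.
case=> /Hgf Ef; subst f' => /eq_in_map Hm.
congr App; apply: functional_extensionality => i; apply: IH; apply: Hm.
by rewrite mem_enum.
Qed.

Fixpoint encf (p : formula S) : GenTree.tree nat :=
  match p with
  | FEq t1 t2 => GenTree.Node 2 [:: enct t1; enct t2]
  | FRel r ts => GenTree.Node 3 (GenTree.Leaf (gr r) :: [seq enct (ts i) | i <- enum 'I_(rarity r)])
  | FNeg q => GenTree.Node 4 [:: encf q]
  | FAnd q1 q2 => GenTree.Node 5 [:: encf q1; encf q2]
  | FExists n q => GenTree.Node 6 [:: GenTree.Leaf n; encf q]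
  end.

Lemma encf_inj : injective encf.
Proof.
elim=> [t1 t2|r ts|q IH|q1 IH1 q2 IH2|n q IH] [u1 u2|r' ts'|q'|q1' q2'|n' q'] //=.
- by case=> /enct_inj -> /enct_inj ->.
- case=> /Hgr Er; subst r' => /eq_in_map Hm.
  congr FRel; apply: functional_extensionality => i; apply: enct_inj; apply: Hm.
  by rewrite mem_enum.
- by case=> /IH ->.
- by case=> /IH1 -> /IH2 ->.
- by case=> -> /IH ->.
Qed.

Lemma formula_enum : exists e : nat -> formula S, forall p, exists k, e k = p.
Proof.
pose code p := pickle (encf p).
have Hc : forall p q, code p = code q -> p = q.
  by move=> p q /(pcan_inj pickleK) /encf_inj.
exists (fun k => match excluded_middle_informative (exists p, code p = k) with
                 | left H => proj1_sig (constructive_indefinite_description _ H)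
                 | right _ => FEq (Var S 0) (Var S 0) end).
move=> p; exists (code p).
case: excluded_middle_informative => [H|[]]; last by exists p.
apply: Hc; exact: (proj2_sig (constructive_indefinite_description _ H)).
Qed.
End Enc.

Theorem lemma1 (S : signature) (M : structure S)
  (Dom : (nat -> M) -> Prop) (phi : (nat -> M) -> (nat -> M)) :
  countable_structure M ->
  countable_type {f : nat -> M | Dom f} ->
  almost_preserves_definable Dom phi ->
  forall a : nat -> M, ~ Dom a ->
  exists b : nat -> M,
    almost_preserves_definable (ext_dom Dom a) (ext_map phi a b).
Proof.
move=> [[gf Hgf] [[gr Hgr] _]] [g Hg] Hpres a Hna.
case: (classic (exists f, Dom f)) => [[f0 Hf0]|Hne]; last first.
  exists a => n P _ fs Hfs; exists 0 => i _.
  have -> : (fun j => ext_map phi a a (fs j) i) = (fun j => fs j i) => //.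
  apply: functional_extensionality => j; rewrite /ext_map.
  case: excluded_middle_informative => [E|H] /=; first by rewrite E.
  by case: (Hfs j) => // HD; case: Hne; exists (fs j).
pose dd (k : nat) : nat -> M :=
  match excluded_middle_informative (exists f : {f | Dom f}, g f = k) with
  | left H => proj1_sig (proj1_sig (constructive_indefinite_description _ H))
  | right _ => f0 end.
have Hdd : forall k, Dom (dd k).
  move=> k; rewrite /dd; case: excluded_middle_informative => // H.
  exact: (proj2_sig (proj1_sig (constructive_indefinite_description _ H))).
have Hsurj : forall f, Dom f -> exists k, dd k = f.
  move=> f Hf; exists (g (exist _ f Hf)); rewrite /dd.
  case: excluded_middle_informative => [H|[]]; last by exists (exist _ f Hf).
  have := proj2_sig (constructive_indefinite_description _ H) => /Hg ->.
  by [].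
have [e He] := formula_enum Hgf Hgr.
exists (bb phi e dd a) => n P [th Hth] fs Hfs.
have Hs : forall j, exists k, (k = 0 /\ fs j = a) \/
                              (exists k', k = k'.+1 /\ dd k' = fs j).
  move=> j; case: (Hfs j) => [HD|->]; last by exists 0; left.
  have [k' Hk'] := Hsurj _ HD; exists k'.+1; right; by exists k'.
pose sj j := proj1_sig (constructive_indefinite_description _ (Hs j)).
pose s (m : nat) := odflt 0 (omap sj (insub m)).
have [N HN] := key Hpres a Hdd He (substf s th).
exists N => i Hi.
have sE : forall j : 'I_n, s j = sj j by move=> j; rewrite /s valK.
rewrite (Hth _ (fun k => envA dd a i (s k))); last first.
  move=> j; rewrite sE /sj.
  have HH := proj2_sig (constructive_indefinite_description _ (Hs j)).
  destruct HH as [[E1 E2]|[k' [E1 E2]]].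
    by rewrite E1 E2.
  by rewrite E1 /= E2.
rewrite (Hth (fun j => ext_map phi a (bb phi e dd a) (fs j) i)
             (fun k => envB phi dd (bb phi e dd a i) i (s k))); last first.
  move=> j; rewrite sE /sj.
  have HH := proj2_sig (constructive_indefinite_description _ (Hs j)).
  destruct HH as [[E1 E2]|[k' [E1 E2]]].
    rewrite E1 E2 /ext_map.
    destruct (excluded_middle_informative (a = a)) as [Ha|Ha]; first reflexivity.
    by case: Ha.
  rewrite E1 /= /ext_map.
  destruct (excluded_middle_informative (fs j = a)) as [Ea|Ea]; last by rewrite /= E2.
  by case: Hna; rewrite -Ea -E2.
rewrite -!substf_ok; exact: HN.
Qed.
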